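(* The map $A\mapsto c(A)\bmod 2$ from $\mathrm{SL}(2,\mathbb Z)$ to $\mathbb Z/2$ satisfies $c(-A)=c(A)$, and the induced map on the modular group $\mathrm{SL}(2,\mathbb Z)/\{\pm I\}$ coincides with the unique surjective group homomorphism from the modular group onto $\mathbb Z/2$.
   Context: Admissible hexagons are the sets $\{\pm a,\pm b,\pm(a+b)\}\subset\mathbb Z^2$ with $(a,b)$ a basis of $\mathbb Z^2$ (corresponding to isotopy classes of $\theta$-curves in $T^2$). $\Gamma$ is the graph on admissible hexagons, two adjacent iff they share two opposite pairs of vertices $\pm\sigma,\pm\mu$ (a flip); it is a trivalent tree with graph distance $d$, acted on by $\mathrm{SL}(2,\mathbb Z)$. With $W_0=\{\pm(1,0),\pm(0,1),\pm(1,-1)\}$, $c(A)=d(W_0,AW_0)$. *)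

(* Defs.v *)
From HB Require Import structures.
From mathcomp Require Import all_boot all_order all_algebra.
From Stdlib Require Import ClassicalEpsilon.
Set Implicit Arguments. Unset Strict Implicit. Unset Printing Implicit Defensive.
Import Order.TTheory GRing.Theory Num.Theory.
Local Open Scope ring_scope.

Definition vec := (int * int)%type.
Definition vopp (v : vec) : vec := (- v.1, - v.2).
Definition vadd (v w : vec) : vec := (v.1 + w.1, v.2 + w.2).

Definition hexagon := vec -> Prop.
Definition hex_eq (H1 H2 : hexagon) : Prop := forall v, H1 v <-> H2 v.

Definition hex_of (a b : vec) : hexagon := fun v =>
  v = a \/ v = vopp a \/ v = b \/ v = vopp b \/ v = vadd a b \/ v = vopp (vadd a b).

Definition is_basis (a b : vec) : Prop := `|a.1 * b.2 - a.2 * b.1| = 1.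

Definition admissible (H : hexagon) : Prop :=
  exists a b, is_basis a b /\ hex_eq H (hex_of a b).

Definition flip_adj (H1 H2 : hexagon) : Prop :=
  admissible H1 /\ admissible H2 /\ ~ hex_eq H1 H2 /\
  exists s m : vec, s <> m /\ s <> vopp m /\
    H1 s /\ H1 (vopp s) /\ H1 m /\ H1 (vopp m) /\
    H2 s /\ H2 (vopp s) /\ H2 m /\ H2 (vopp m).

Inductive walk : hexagon -> hexagon -> nat -> Prop :=
| walk0 H H' : admissible H -> hex_eq H H' -> walk H H' 0
| walkS H1 H2 H3 n : walk H1 H2 n -> flip_adj H2 H3 -> walk H1 H3 n.+1.

Definition gdist (H1 H2 : hexagon) (n : nat) : Prop :=
  walk H1 H2 n /\ forall m, walk H1 H2 m -> (n <= m)%N.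

Definition W0 : hexagon := fun v =>
  v = (1, 0) \/ v = (-1, 0) \/ v = (0, 1) \/ v = (0, -1) \/ v = (1, -1) \/ v = (-1, 1).

Definition mxact (A : 'M[int]_2) (v : vec) : vec :=
  (A ord0 ord0 * v.1 + A ord0 ord_max * v.2,
   A ord_max ord0 * v.1 + A ord_max ord_max * v.2).

Definition hex_image (A : 'M[int]_2) (H : hexagon) : hexagon :=
  fun v => exists w, H w /\ v = mxact A w.

(* c(A) = d(W0, A W0)  (Gamma is connected, so the distance exists) *)
Definition c (A : 'M[int]_2) : nat :=
  epsilon (inhabits 0%N) (fun n => gdist W0 (hex_image A W0) n).

Definition cmod2 (A : 'M[int]_2) : 'Z_2 := (c A)%:R.

(* Main.v *)
Require Import Defs.
From HB Require Import structures.
From mathcomp Require Import all_boot all_order all_algebra.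
From mathcomp Require Import zify ring.
From Stdlib Require Import ClassicalEpsilon Classical FunctionalExtensionality PropExtensionality.
Import Order.TTheory GRing.Theory Num.Theory.
Local Open Scope ring_scope.
Set Implicit Arguments. Unset Strict Implicit. Unset Printing Implicit Defensive.

Notation i0 := (@ord0 1).
Notation i1 := (@ord_max 1).

Lemma ord2P (i : 'I_2) : i = i0 \/ i = i1.
Proof. case: i => [[|[|k]] Hk]; [left|right|]; try exact: val_inj. by []. Qed.

Lemma sum2 (F : 'I_2 -> int) : \sum_(k < 2) F k = F i0 + F i1.
Proof.
rewrite big_ord_recl big_ord1; congr (_ + F _); exact: val_inj.
Qed.

Lemma det2 (A : 'M[int]_2) : \det A = A i0 i0 * A i1 i1 - A i0 i1 * A i1 i0.
Proof.
rewrite (expand_det_row _ i0) sum2 /cofactor !det_mx11 !mxE /=.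
have -> : (lift i0 (0 : 'I_1)) = i1 by apply: val_inj.
have -> : (lift i1 (0 : 'I_1)) = i0 by apply: val_inj.
rewrite /= expr0 expr1 /=. ring.
Qed.

Lemma mul2E (A B : 'M[int]_2) i j : (A *m B) i j = A i i0 * B i0 j + A i i1 * B i1 j.
Proof. by rewrite mxE sum2. Qed.

Lemma mx2P (A B : 'M[int]_2) : A i0 i0 = B i0 i0 -> A i0 i1 = B i0 i1 ->
  A i1 i0 = B i1 i0 -> A i1 i1 = B i1 i1 -> A = B.
Proof.
move=> h1 h2 h3 h4; apply/matrixP => i j.
by case: (ord2P i) => ->; case: (ord2P j) => ->.
Qed.

Definition mk (a b c d : int) : 'M[int]_2 :=
  \matrix_(i < 2, j < 2) if i == i0 then (if j == i0 then a else b) else (if j == i0 then c else d).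

Lemma mkE a b c d : let M := mk a b c d in
  [/\ M i0 i0 = a, M i0 i1 = b, M i1 i0 = c & M i1 i1 = d].
Proof. by rewrite /= !mxE. Qed.

Definition detv (a b : vec) : int := a.1 * b.2 - a.2 * b.1.

Lemma basisE a b : is_basis a b <-> detv a b = 1 \/ detv a b = -1.
Proof. rewrite /is_basis /detv; split; lia. Qed.

Ltac vsolve := rewrite /vopp /vadd /=; apply/pair_equal_spec; split; ring.
Ltac pick := first [ vsolve | left; vsolve | right; pick ].
Ltac hexsolve := let v := fresh "v" in move=> v; rewrite /hex_of; split;
  move=> [->|[->|[->|[->|[->| ->]]]]]; pick.

Lemma L1 a b s m : is_basis a b -> hex_of a b s -> hex_of a b m -> s <> m -> s <> vopp m ->
  is_basis s m /\ (hex_eq (hex_of a b) (hex_of s m) \/ hex_eq (hex_of a b) (hex_of s (vopp m))).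
Proof.
case: a => a1 a2; case: b => b1 b2.
move=> /basisE hb.
move=> [->|[->|[->|[->|[->| ->]]]]]; move=> [->|[->|[->|[->|[->| ->]]]]] h1 h2;
  try (exfalso; first [apply: h1; vsolve | apply: h2; vsolve]).
all: split; [apply/basisE; rewrite /detv /vopp /vadd /= in hb *; nia|].
all: first [left; hexsolve | right; hexsolve].
Qed.

Lemma mxact_opp A v : mxact A (vopp v) = vopp (mxact A v).
Proof. rewrite /mxact /vopp /=; apply/pair_equal_spec; split; ring. Qed.
Lemma mxact_add A v w : mxact A (vadd v w) = vadd (mxact A v) (mxact A w).
Proof. rewrite /mxact /vadd /=; apply/pair_equal_spec; split; ring. Qed.
Lemma mxact_mul A B v : mxact (A *m B) v = mxact A (mxact B v).
Proof. rewrite /mxact /= !mul2E; apply/pair_equal_spec; split; ring. Qed.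
Lemma mxact_oppm A v : mxact (- A) v = vopp (mxact A v).
Proof. rewrite /mxact /vopp /= !mxE; apply/pair_equal_spec; split; ring. Qed.
Lemma mxact1 v : mxact 1 v = v.
Proof. case: v => x y; rewrite /mxact /= !mxE /=; apply/pair_equal_spec; split; ring. Qed.
Lemma vopp_inv v : vopp (vopp v) = v.
Proof. case: v => x y; rewrite /vopp /=; by rewrite !opprK. Qed.

Lemma detv_act A a b : detv (mxact A a) (mxact A b) = \det A * detv a b.
Proof. rewrite det2 /detv /mxact /=; ring. Qed.

Lemma mxact_inj A v w : \det A = 1 -> mxact A v = mxact A w -> v = w.
Proof.
rewrite det2 /mxact; case: v => x y; case: w => x' y' /= hd /pair_equal_spec [e1 e2].
set p := A i0 i0 in hd e1 e2 *; set q := A i0 i1 in hd e1 e2 *.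
set r := A i1 i0 in hd e1 e2 *; set t := A i1 i1 in hd e1 e2 *.
have ex : x - x' = t * ((p * x + q * y) - (p * x' + q * y')) - q * ((r * x + t * y) - (r * x' + t * y')).
  by rewrite -[LHS]mul1r -{1}hd; ring.
have ey : y - y' = p * ((r * x + t * y) - (r * x' + t * y')) - r * ((p * x + q * y) - (p * x' + q * y')).
  by rewrite -[LHS]mul1r -{1}hd; ring.
rewrite e1 e2 !subrr !mulr0 subrr in ex ey.
apply/pair_equal_spec; split; apply/eqP; rewrite -subr_eq0; apply/eqP; [exact: ex|exact: ey].
Qed.

Lemma hex_eq_refl H : hex_eq H H.
Proof. by []. Qed.
Lemma hex_eq_sym H1 H2 : hex_eq H1 H2 -> hex_eq H2 H1.
Proof. move=> h v; split; move=> hv; apply/h; exact hv. Qed.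
Lemma hex_eq_trans H1 H2 H3 : hex_eq H1 H2 -> hex_eq H2 H3 -> hex_eq H1 H3.
Proof. move=> h1 h2 v; split=> hv; [apply/h2/h1|apply/h1/h2]; exact hv. Qed.

Lemma admissible_eq H H' : hex_eq H H' -> admissible H -> admissible H'.
Proof.
move=> h [a [b [hb hab]]]; exists a, b; split=> //.
exact: hex_eq_trans (hex_eq_sym h) hab.
Qed.

Lemma flip_eq H1 H2 H1' H2' : hex_eq H1 H1' -> hex_eq H2 H2' -> flip_adj H1 H2 -> flip_adj H1' H2'.
Proof.
move=> e1 e2 [a1 [a2 [ne [s [m [sm [sm' [h1 [h2 [h3 [h4 [h5 [h6 [h7 h8]]]]]]]]]]]]]].
split; [exact: admissible_eq a1|split; [exact: admissible_eq a2|split]].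
  move=> e; apply: ne; apply: hex_eq_trans e1 _; apply: hex_eq_trans e _; exact: hex_eq_sym.
exists s, m; do 2 split=> //.
by do 8 (try split); [apply/e1|apply/e1|apply/e1|apply/e1|apply/e2|apply/e2|apply/e2|apply/e2].
Qed.

Lemma flip_sym H1 H2 : flip_adj H1 H2 -> flip_adj H2 H1.
Proof.
move=> [a1 [a2 [ne [s [m [sm [sm' [h1 [h2 [h3 [h4 [h5 [h6 [h7 h8]]]]]]]]]]]]]].
split=> //; split=> //; split; first by move=> e; apply: ne; exact: hex_eq_sym.
by exists s, m.
Qed.

Lemma walk_adm H1 H2 n : walk H1 H2 n -> admissible H1 /\ admissible H2.
Proof.
elim=> [H H' a e|H H' H'' k w [ih1 ih2] [_ [a2 _]]]; split=> //.
exact: admissible_eq a.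
Qed.

Lemma walk_eqr H1 H2 H2' n : walk H1 H2 n -> hex_eq H2 H2' -> walk H1 H2' n.
Proof.
move=> w; elim: w H2' => [H H' a e|H H' H'' k w ih f] H2' e'.
  by apply: walk0 => //; apply: hex_eq_trans e e'.
apply: walkS w _; exact: flip_eq (hex_eq_refl _) e' f.
Qed.

Lemma walk_eql H1 H1' H2 n : walk H1 H2 n -> hex_eq H1 H1' -> walk H1' H2 n.
Proof.
elim=> [H H' a e|H H' H'' k w ih f] e'.
  apply: walk0; [exact: admissible_eq a|]; apply: hex_eq_trans e; exact: hex_eq_sym.
exact: walkS (ih e') f.
Qed.

Lemma walk_cat H1 H2 H3 n k : walk H1 H2 n -> walk H2 H3 k -> walk H1 H3 (n + k).
Proof.
move=> w1 w2; elim: w2 H1 w1 => [H H' a e|H H' H'' j w ih f] H1 w1.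
  by rewrite addn0; apply: walk_eqr w1 e.
rewrite addnS; exact: walkS (ih _ w1) f.
Qed.

Lemma walk1 H1 H2 : flip_adj H1 H2 -> walk H1 H2 1.
Proof.
move=> f; apply: (@walkS H1 H1 H2 0 _ f); apply: walk0 => //; by case: f.
Qed.

Lemma image_eq A H H' : hex_eq H H' -> hex_eq (hex_image A H) (hex_image A H').
Proof. move=> e v; split=> [[w [hw ->]]|[w [hw ->]]]; exists w; split=> //; apply/e; exact hw. Qed.

Lemma image_mul A B H : hex_eq (hex_image (A *m B) H) (hex_image A (hex_image B H)).
Proof.
move=> v; split.
  move=> [w [hw ->]]; exists (mxact B w); split; last exact: mxact_mul.
  by exists w.
move=> [w [[u [hu ->]] ->]]; exists u; split=> //; by rewrite mxact_mul.
Qed.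

Lemma image1 H : hex_eq (hex_image 1 H) H.
Proof. move=> v; split; first by move=> [w [hw ->]]; rewrite mxact1.
by move=> hv; exists v; rewrite mxact1. Qed.

Lemma image_of A a b : hex_eq (hex_image A (hex_of a b)) (hex_of (mxact A a) (mxact A b)).
Proof.
move=> v; split.
  move=> [w [hw ->]]; move: hw; rewrite /hex_of.
  by move=> [->|[->|[->|[->|[->| ->]]]]]; rewrite ?mxact_opp ?mxact_add; tauto.
rewrite /hex_of; move=> [->|[->|[->|[->|[->| ->]]]]].
- by exists a; split=> //; left.
- by exists (vopp a); rewrite mxact_opp; split=> //; tauto.
- by exists b; split=> //; tauto.
- by exists (vopp b); rewrite mxact_opp; split=> //; tauto.
- by exists (vadd a b); rewrite mxact_add; split=> //; tauto.
- by exists (vopp (vadd a b)); rewrite mxact_opp mxact_add; split=> //; tauto.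
Qed.

Lemma image_adm A H : \det A = 1 -> admissible H -> admissible (hex_image A H).
Proof.
move=> hd [a [b [hb e]]]; exists (mxact A a), (mxact A b); split.
  by move/basisE: hb => hb; apply/basisE; rewrite detv_act hd mul1r.
apply: hex_eq_trans (image_eq A e) _; exact: image_of.
Qed.

Lemma image_flip A H1 H2 : \det A = 1 -> flip_adj H1 H2 -> flip_adj (hex_image A H1) (hex_image A H2).
Proof.
move=> hd [a1 [a2 [ne [s [m [sm [sm' [h1 [h2 [h3 [h4 [h5 [h6 [h7 h8]]]]]]]]]]]]]].
split; [exact: image_adm hd a1|split; [exact: image_adm hd a2|split]].
  move=> e; apply: ne => v; split=> hv.
    have [w [hw /(mxact_inj hd) ->]] : hex_image A H2 (mxact A v) by apply/e; exists v.
    exact hw.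
  have [w [hw /(mxact_inj hd) ->]] : hex_image A H1 (mxact A v) by apply/e; exists v.
  exact hw.
exists (mxact A s), (mxact A m); split.
  by move/(mxact_inj hd).
split; first by rewrite -mxact_opp => /(mxact_inj hd).
rewrite -!mxact_opp.
do 8 (try split); by (eexists; split; [|reflexivity]).
Qed.

Lemma image_walk A H1 H2 n : \det A = 1 -> walk H1 H2 n -> walk (hex_image A H1) (hex_image A H2) n.
Proof.
move=> hd; elim=> [H H' a e|H H' H'' k w ih f].
  apply: walk0; [exact: image_adm|exact: image_eq].
exact: walkS ih (image_flip hd f).
Qed.

Definition ob (x : int) : bool := odd `|x|%N.
Lemma obD x y : ob (x + y) = ob x (+) ob y.
Proof. rewrite /ob; case ex: (odd `|x|%N); case ey: (odd `|y|%N); simpl; lia. Qed.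
Lemma obM x y : ob (x * y) = ob x && ob y.
Proof. by rewrite /ob abszM oddM. Qed.
Lemma obN x : ob (- x) = ob x.
Proof. by rewrite /ob abszN. Qed.

Definition sg (A : 'M[int]_2) : bool :=
  (ob (A i0 i0) && ob (A i1 i0)) (+) (ob (A i0 i1) && ob (A i1 i1)) (+) (ob (A i0 i1) && ob (A i1 i0)).

Lemma ob_det A : \det A = 1 -> (ob (A i0 i0) && ob (A i1 i1)) (+) (ob (A i0 i1) && ob (A i1 i0)) = true.
Proof. by rewrite det2 => h; move: (congr1 ob h); rewrite obD obN !obM. Qed.

Lemma sg_mul A B : \det A = 1 -> \det B = 1 -> sg (A *m B) = sg A (+) sg B.
Proof.
move=> /ob_det hA /ob_det hB; rewrite /sg !mul2E !obD !obM.
move: hA hB.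
case: (ob (A i0 i0)); case: (ob (A i0 i1)); case: (ob (A i1 i0)); case: (ob (A i1 i1));
case: (ob (B i0 i0)); case: (ob (B i0 i1)); case: (ob (B i1 i0)); case: (ob (B i1 i1)); by [].
Qed.

Lemma sg_opp A : sg (- A) = sg A.
Proof. by rewrite /sg !mxE !obN. Qed.

Lemma sg1 : sg 1 = false.
Proof. by rewrite /sg !mxE. Qed.

Definition inv2 (M : 'M[int]_2) := mk (M i1 i1) (- M i0 i1) (- M i1 i0) (M i0 i0).

Lemma inv2_l M : \det M = 1 -> inv2 M *m M = 1.
Proof.
rewrite det2 => h; case: (mkE (M i1 i1) (- M i0 i1) (- M i1 i0) (M i0 i0)) => h1 h2 h3 h4.
apply: mx2P; rewrite !mul2E /inv2 ?h1 ?h2 ?h3 ?h4 !mxE /= -?h; ring.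
Qed.

Lemma inv2_r M : \det M = 1 -> M *m inv2 M = 1.
Proof.
rewrite det2 => h; case: (mkE (M i1 i1) (- M i0 i1) (- M i1 i0) (M i0 i0)) => h1 h2 h3 h4.
apply: mx2P; rewrite !mul2E /inv2 ?h1 ?h2 ?h3 ?h4 !mxE /= -?h; ring.
Qed.

Lemma det_inv2 M : \det M = 1 -> \det (inv2 M) = 1.
Proof.
rewrite !det2 /inv2 => h; case: (mkE (M i1 i1) (- M i0 i1) (- M i1 i0) (M i0 i0)) => -> -> -> ->.
rewrite -h; ring.
Qed.

Definition e1 : vec := (1, 0).
Definition f1 : vec := (0, -1).

Lemma W0_of : hex_eq W0 (hex_of e1 f1).
Proof.
move=> v; rewrite /W0 /hex_of /e1 /f1; split; move=> [->|[->|[->|[->|[->| ->]]]]]; pick.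
Qed.

Lemma image_W0 A : hex_eq (hex_image A W0) (hex_of (mxact A e1) (mxact A f1)).
Proof. apply: hex_eq_trans (image_eq A W0_of) _; exact: image_of. Qed.

Lemma W0E x y : W0 (x, y) -> (x = 1 /\ y = 0) \/ (x = -1 /\ y = 0) \/ (x = 0 /\ y = 1) \/
  (x = 0 /\ y = -1) \/ (x = 1 /\ y = -1) \/ (x = -1 /\ y = 1).
Proof.
by move=> [[-> ->]|[[-> ->]|[[-> ->]|[[-> ->]|[[-> ->]|[-> ->]]]]]]; tauto.
Qed.

Lemma stab C : \det C = 1 -> hex_eq (hex_image C W0) W0 -> sg C = false.
Proof.
move=> hd e.
have E1 : W0 (mxact C (1, 0)) by apply/e; exists (1, 0); split=> //; left.
have E2 : W0 (mxact C (0, 1)) by apply/e; exists (0, 1); split=> //; do 2 right; left.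
have E3 : W0 (mxact C (1, -1)) by apply/e; exists (1, -1); split=> //; do 4 right; left.
move: E1 E2 hd E3; rewrite det2 /mxact /sg /= !mulr1 !mulr0 !addr0 !add0r.
move=> [[-> ->]|[[-> ->]|[[-> ->]|[[-> ->]|[[-> ->]|[-> ->]]]]]];
move=> [[-> ->]|[[-> ->]|[[-> ->]|[[-> ->]|[[-> ->]|[-> ->]]]]]]; rewrite /ob /= => hd /W0E; lia.
Qed.

Lemma uniq_sg M M' : \det M = 1 -> \det M' = 1 ->
  hex_eq (hex_image M W0) (hex_image M' W0) -> sg M = sg M'.
Proof.
move=> hM hM' e.
have dC : \det (inv2 M *m M') = 1 by rewrite det_mulmx det_inv2 // hM' mulr1.
have sC : sg (inv2 M *m M') = false.
  apply: stab dC _.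
  apply: hex_eq_trans (image_mul _ _ _) _.
  apply: hex_eq_trans (image_eq _ (hex_eq_sym e)) _.
  apply: hex_eq_trans (hex_eq_sym (image_mul _ _ _)) _.
  rewrite inv2_l //; exact: image1.
have -> : M' = M *m (inv2 M *m M') by rewrite mulmxA inv2_r // mul1mx.
by rewrite sg_mul // sC addbF.
Qed.

Definition hexM (a b : vec) : 'M[int]_2 :=
  if detv a b == -1 then mk a.1 (- b.1) a.2 (- b.2) else mk b.1 (- a.1) b.2 (- a.2).

Lemma hexM_spec a b : is_basis a b ->
  \det (hexM a b) = 1 /\ hex_eq (hex_image (hexM a b) W0) (hex_of a b).
Proof.
move/basisE; case: a => a1 a2; case: b => b1 b2; rewrite /hexM /detv /=.
move=> [hd|hd]; rewrite hd /=.
  case: (mkE b1 (- a1) b2 (- a2)) => h1 h2 h3 h4; split.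
    by rewrite det2 h1 h2 h3 h4; nia.
  apply: hex_eq_trans (image_W0 _) _; rewrite /mxact /e1 /f1 /= h1 h2 h3 h4; hexsolve.
case: (mkE a1 (- b1) a2 (- b2)) => h1 h2 h3 h4; split.
  by rewrite det2 h1 h2 h3 h4; nia.
apply: hex_eq_trans (image_W0 _) _; rewrite /mxact /e1 /f1 /= h1 h2 h3 h4; hexsolve.
Qed.

Lemma hexM_flip s m : is_basis s m -> sg (hexM s (vopp m)) = ~~ sg (hexM s m).
Proof.
move/basisE; case: s => s1 s2; case: m => m1 m2; rewrite /hexM /detv /vopp /= => hd.
have hd' : ob (s1 * m2) (+) ob (s2 * m1) = true.
  by case: hd => h; move: (congr1 ob h); rewrite obD obN.
have [h|h] : s1 * - m2 - s2 * - m1 = -1 /\ s1 * m2 - s2 * m1 = 1 \/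
             s1 * - m2 - s2 * - m1 = 1 /\ s1 * m2 - s2 * m1 = -1 by lia.
  case: h => -> -> /=.
  case: (mkE s1 (- s1) s2 (- s2)) => _ _ _ _.
  rewrite /sg; case: (mkE s1 (- - m1) s2 (- - m2)) => -> -> -> ->.
  case: (mkE m1 (- s1) m2 (- s2)) => -> -> -> ->.
  move: hd'; rewrite !obN !obM.
  by case: (ob s1); case: (ob s2); case: (ob m1); case: (ob m2).
case: h => -> -> /=.
rewrite /sg; case: (mkE (- m1) (- s1) (- m2) (- s2)) => -> -> -> ->.
case: (mkE s1 (- m1) s2 (- m2)) => -> -> -> ->.
move: hd'; rewrite !obN !obM.
by case: (ob s1); case: (ob s2); case: (ob m1); case: (ob m2).
Qed.

Lemma basis_opp s m : is_basis s m -> is_basis s (vopp m).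
Proof. rewrite /is_basis /vopp /=; lia. Qed.

Lemma L5aux C s m : \det C = 1 -> is_basis s m -> hex_eq W0 (hex_of s m) ->
  hex_eq (hex_image C W0) (hex_of s (vopp m)) -> sg C = true.
Proof.
move=> hC hb e1' e2'.
have [d1 h1] := hexM_spec hb.
have [d2 h2] := hexM_spec (basis_opp hb).
have s1 : sg (hexM s m) = false.
  rewrite -sg1; apply: uniq_sg => //; first by rewrite det1.
  apply: hex_eq_trans h1 _; apply: hex_eq_trans (hex_eq_sym e1') _; exact: hex_eq_sym (image1 _).
have s2 : sg C = sg (hexM s (vopp m)).
  apply: uniq_sg => //; apply: hex_eq_trans e2' _; exact: hex_eq_sym h2.
by rewrite s2 hexM_flip // s1.
Qed.

Lemma basis_e1f1 : is_basis e1 f1.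
Proof. by rewrite /is_basis /e1 /f1 /=. Qed.

Lemma L5 C : \det C = 1 -> flip_adj W0 (hex_image C W0) -> sg C = true.
Proof.
move=> hC [a1 [a2 [ne [s [m [sm [sm' [h1 [h2 [h3 [h4 [h5 [h6 [h7 h8]]]]]]]]]]]]]].
have [hb1 E1] := L1 basis_e1f1 (proj1 (W0_of s) h1) (proj1 (W0_of m) h3) sm sm'.
have bu : is_basis (mxact C e1) (mxact C f1).
  apply/basisE; rewrite detv_act hC mul1r; apply/basisE; exact: basis_e1f1.
have [_ E2] := L1 bu (proj1 (image_W0 C s) h5) (proj1 (image_W0 C m) h7) sm sm'.
have W0e := hex_eq_trans W0_of.
have Ce := hex_eq_trans (image_W0 C).
case: E1 => E1; case: E2 => E2.
- exfalso; apply: ne; apply: hex_eq_trans (W0e _ E1) _; exact: hex_eq_sym (Ce _ E2).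
- exact: L5aux hC hb1 (W0e _ E1) (Ce _ E2).
- apply: (L5aux hC (basis_opp hb1) (W0e _ E1)); rewrite vopp_inv; exact: Ce _ E2.
- exfalso; apply: ne; apply: hex_eq_trans (W0e _ E1) _; exact: hex_eq_sym (Ce _ E2).
Qed.

Lemma adm_M H : admissible H -> exists M, \det M = 1 /\ hex_eq H (hex_image M W0).
Proof.
move=> [a [b [hb e]]]; have [d h] := hexM_spec hb; exists (hexM a b); split=> //.
apply: hex_eq_trans e _; exact: hex_eq_sym h.
Qed.

Lemma L6 H0 H n : walk H0 H n -> forall M0 M, \det M0 = 1 -> \det M = 1 ->
  hex_eq H0 (hex_image M0 W0) -> hex_eq H (hex_image M W0) -> odd n = sg M0 (+) sg M.
Proof.
elim=> [H1 H' a e|H1 H2 H3 k w ih f] M0 M d0 d e0 e'.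
  rewrite (uniq_sg d0 d) ?addbb //.
  apply: hex_eq_trans (hex_eq_sym e0) _; exact: hex_eq_trans e e'.
have [a2 _] := f.
have [M2 [d2 e2]] := adm_M a2.
have ihk := ih M0 M2 d0 d2 e0 e2.
have f' := flip_eq e2 e' f.
have f'' := image_flip (det_inv2 d2) f'.
have dC : \det (inv2 M2 *m M) = 1 by rewrite det_mulmx det_inv2 // d mulr1.
have sC : sg (inv2 M2 *m M) = true.
  apply: L5 dC _; apply: flip_eq _ _ f''.
    apply: hex_eq_trans (hex_eq_sym (image_mul _ _ _)) _; rewrite inv2_l //; exact: image1.
  exact: hex_eq_sym (image_mul _ _ _).
have -> : M = M2 *m (inv2 M2 *m M) by rewrite mulmxA inv2_r // mul1mx.
rewrite sg_mul // sC /= ihk.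
by case: (sg M0); case: (sg M2).
Qed.

Definition mT := mk 1 1 0 1.
Definition mTi := mk 1 (-1) 0 1.
Definition mL := mk 1 0 1 1.
Definition mLi := mk 1 0 (-1) 1.

Definition gens N := N = mT \/ N = mTi \/ N = mL \/ N = mLi.

Inductive gen : 'M[int]_2 -> Prop :=
| gen1 : gen 1
| genN : gen (- 1)
| genS B N : gen B -> gens N -> gen (N *m B).

Lemma mk00 a b c d : mk a b c d i0 i0 = a. Proof. by rewrite mxE. Qed.
Lemma mk01 a b c d : mk a b c d i0 i1 = b. Proof. by rewrite mxE. Qed.
Lemma mk10 a b c d : mk a b c d i1 i0 = c. Proof. by rewrite mxE. Qed.
Lemma mk11 a b c d : mk a b c d i1 i1 = d. Proof. by rewrite mxE. Qed.
Ltac ment := rewrite ?mul2E /mT /mTi /mL /mLi ?mk00 ?mk01 ?mk10 ?mk11.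

Lemma mulT A : [/\ (mT *m A) i0 i0 = A i0 i0 + A i1 i0, (mT *m A) i0 i1 = A i0 i1 + A i1 i1,
  (mT *m A) i1 i0 = A i1 i0 & (mT *m A) i1 i1 = A i1 i1].
Proof. by ment; split; ring. Qed.
Lemma mulTi A : [/\ (mTi *m A) i0 i0 = A i0 i0 - A i1 i0, (mTi *m A) i0 i1 = A i0 i1 - A i1 i1,
  (mTi *m A) i1 i0 = A i1 i0 & (mTi *m A) i1 i1 = A i1 i1].
Proof. by ment; split; ring. Qed.
Lemma mulL A : [/\ (mL *m A) i0 i0 = A i0 i0, (mL *m A) i0 i1 = A i0 i1,
  (mL *m A) i1 i0 = A i1 i0 + A i0 i0 & (mL *m A) i1 i1 = A i1 i1 + A i0 i1].
Proof. by ment; split; ring. Qed.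
Lemma mulLi A : [/\ (mLi *m A) i0 i0 = A i0 i0, (mLi *m A) i0 i1 = A i0 i1,
  (mLi *m A) i1 i0 = A i1 i0 - A i0 i0 & (mLi *m A) i1 i1 = A i1 i1 - A i0 i1].
Proof. by ment; split; ring. Qed.

Ltac mxsolve := apply: mx2P; rewrite ?mul2E !mxE /=; ring.

Lemma TiT : mTi *m mT = 1. Proof. mxsolve. Qed.
Lemma TTi : mT *m mTi = 1. Proof. mxsolve. Qed.
Lemma LiL : mLi *m mL = 1. Proof. mxsolve. Qed.
Lemma LLi : mL *m mLi = 1. Proof. mxsolve. Qed.

Lemma det_gens N : gens N -> \det N = 1.
Proof. by move=> [->|[->|[->|->]]]; rewrite det2 !mxE /=. Qed.

Lemma det_gen A : gen A -> \det A = 1.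
Proof.
elim=> [|| B N _ ih hN]; first by rewrite det1.
  by rewrite det2 !mxE /=.
by rewrite det_mulmx ih det_gens // mulr1.
Qed.

Lemma gen_back N N' A : gen (N *m A) -> N' *m N = 1 -> gens N' -> gen A.
Proof. move=> g e hN'; have -> : A = N' *m (N *m A) by rewrite mulmxA e mul1mx. exact: genS. Qed.

Lemma mul_eq1 (p s : int) : p * s = 1 -> (p = 1 /\ s = 1) \/ (p = -1 /\ s = -1).
Proof.
move=> h.
have [hp|[hp|hp]] : 0 < p \/ p = 0 \/ p < 0 by lia.
- have hs : 0 < s by nia.
  have : p <= 1 by nia.
  have : s <= 1 by nia.
  lia.
- by rewrite hp mul0r in h.
- have hs : s < 0 by nia.
  have : -1 <= p by nia.
  have : -1 <= s by nia.
  lia.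
Qed.

Lemma gensT : gens mT. Proof. by left. Qed.
Lemma gensTi : gens mTi. Proof. by right; left. Qed.
Lemma gensL : gens mL. Proof. by right; right; left. Qed.
Lemma gensLi : gens mLi. Proof. by right; right; right. Qed.

Lemma mk_eta (A : 'M[int]_2) : mk (A i0 i0) (A i0 i1) (A i1 i0) (A i1 i1) = A.
Proof. apply: mx2P; by rewrite ?mk00 ?mk01 ?mk10 ?mk11. Qed.
Lemma det_mk p q r s : \det (mk p q r s) = p * s - q * r.
Proof. by rewrite det2 mk00 mk01 mk10 mk11. Qed.
Lemma T_mk p q r s : mT *m mk p q r s = mk (p + r) (q + s) r s.
Proof. apply: mx2P; ment; ring. Qed.
Lemma Ti_mk p q r s : mTi *m mk p q r s = mk (p - r) (q - s) r s.
Proof. apply: mx2P; ment; ring. Qed.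
Lemma L_mk p q r s : mL *m mk p q r s = mk p q (r + p) (s + q).
Proof. apply: mx2P; ment; ring. Qed.
Lemma Li_mk p q r s : mLi *m mk p q r s = mk p q (r - p) (s - q).
Proof. apply: mx2P; ment; ring. Qed.
Lemma mk_1 : mk 1 0 0 1 = 1.
Proof. apply: mx2P; rewrite ?mk00 ?mk01 ?mk10 ?mk11 !mxE //. Qed.
Lemma mk_N1 : mk (-1) 0 0 (-1) = - 1.
Proof. apply: mx2P; rewrite ?mk00 ?mk01 ?mk10 ?mk11 !mxE //. Qed.

Lemma tri k p q s : p * s = 1 -> (`|q| <= k)%N -> gen (mk p q 0 s).
Proof.
elim: k q => [|k ih] q hd hq.
  have -> : q = 0 by lia.
  have [[-> ->]|[-> ->]] := mul_eq1 hd; [rewrite mk_1; exact: gen1|rewrite mk_N1; exact: genN].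
have [hq0|hq0] : q = 0 \/ q <> 0 by lia.
  by apply: ih => //; lia.
have [[hp hs]|[hp hs]] := mul_eq1 hd;
  (have [hq1|hq1] : 0 < q \/ q < 0 by lia).
- apply: (gen_back (N := mTi) (N' := mT)); [|exact: TTi|exact: gensT].
  rewrite Ti_mk subr0; apply: ih => //; lia.
- apply: (gen_back (N := mT) (N' := mTi)); [|exact: TiT|exact: gensTi].
  rewrite T_mk addr0; apply: ih => //; lia.
- apply: (gen_back (N := mT) (N' := mTi)); [|exact: TiT|exact: gensTi].
  rewrite T_mk addr0; apply: ih => //; lia.
- apply: (gen_back (N := mTi) (N' := mT)); [|exact: TTi|exact: gensT].
  rewrite Ti_mk subr0; apply: ih => //; lia.
Qed.

Lemma all_gen_mk n p q r s : p * s - q * r = 1 -> (`|p| + `|r| <= n)%N -> gen (mk p q r s).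
Proof.
elim: n p q r s => [|n ih] p q r s hd hn.
  have hp : p = 0 by lia.
  have hr : r = 0 by lia.
  by rewrite hp hr mul0r mulr0 subr0 in hd.
have [hr|hr] : r = 0 \/ r <> 0 by lia.
  rewrite hr; apply: (tri (k := `|q|%N)) => //; move: hd; rewrite hr mulr0 subr0 //.
have [hp|hp] : p = 0 \/ p <> 0 by lia.
  (* A = Ti (L (Li (T A))) *)
  apply: (gen_back (N := mT) (N' := mTi)); [|exact: TiT|exact: gensTi].
  rewrite T_mk.
  apply: (gen_back (N := mLi) (N' := mL)); [|exact: LLi|exact: gensL].
  rewrite Li_mk hp add0r subrr.
  apply: (tri (k := absz (q + s))) => //.
  move: hd; rewrite hp mul0r sub0r; nia.
have [hle|hlt] : (`|r| <= `|p|)%N \/ (`|p| < `|r|)%N by lia.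
  have [hpr|hpr] : 0 < p * r \/ p * r < 0 by nia.
    apply: (gen_back (N := mTi) (N' := mT)); [|exact: TTi|exact: gensT].
    rewrite Ti_mk; apply: ih; [rewrite -hd; ring|nia].
  apply: (gen_back (N := mT) (N' := mTi)); [|exact: TiT|exact: gensTi].
  rewrite T_mk; apply: ih; [rewrite -hd; ring|nia].
have [hpr|hpr] : 0 < p * r \/ p * r < 0 by nia.
  apply: (gen_back (N := mLi) (N' := mL)); [|exact: LLi|exact: gensL].
  rewrite Li_mk; apply: ih; [rewrite -hd; ring|nia].
apply: (gen_back (N := mL) (N' := mLi)); [|exact: LiL|exact: gensLi].
rewrite L_mk; apply: ih; [rewrite -hd; ring|nia].
Qed.

Lemma all_gen A : \det A = 1 -> gen A.
Proof.
rewrite -(mk_eta A) det_mk => hd; exact: (all_gen_mk (n := (`|A i0 i0| + `|A i1 i0|)%N)).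
Qed.

Lemma z2cases (x : 'Z_2) : x = 0 \/ x = 1.
Proof. case: x => [[|[|k]] hk]. left; exact: val_inj. right; exact: val_inj. by []. Qed.
Lemma z2_11 : (1 + 1 : 'Z_2) = 0.
Proof. by rewrite -(natrD _ 1 1) (pchar_Zp (p := 2)). Qed.
Lemma z2nat n : (n%:R : 'Z_2) = (odd n)%:R.
Proof. by rewrite {1}(divn_eq n 2) natrD natrM (pchar_Zp (p := 2)) // mulr0 add0r modn2. Qed.
Lemma z2addb a b : ((a (+) b)%:R : 'Z_2) = a%:R + b%:R.
Proof. case: a; case: b => /=; rewrite ?addr0 ?add0r //. by rewrite z2_11. Qed.
Lemma z2xx (x : 'Z_2) : x + x = 0.
Proof. case: (z2cases x) => ->; [by rewrite addr0|exact: z2_11]. Qed.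
Lemma z2_10 : (1 : 'Z_2) <> 0.
Proof. by []. Qed.

Lemma adm_W0 : admissible W0.
Proof. exists e1, f1; split; [exact: basis_e1f1|exact: W0_of]. Qed.

Lemma W0_sym v : W0 v -> W0 (vopp v).
Proof. rewrite /W0 => [[->|[->|[->|[->|[->| ->]]]]]]; pick. Qed.

Lemma image_oppm A H : (forall v, H v -> H (vopp v)) -> hex_eq (hex_image (- A) H) (hex_image A H).
Proof.
move=> hs v; split=> [[w [hw ->]]|[w [hw ->]]].
  by exists (vopp w); split; [exact: hs|rewrite mxact_oppm mxact_opp].
by exists (vopp w); split; [exact: hs|rewrite mxact_oppm mxact_opp vopp_inv].
Qed.

Lemma flip_crit N s m x : \det N = 1 -> s <> m -> s <> vopp m ->
  W0 s -> W0 (vopp s) -> W0 m -> W0 (vopp m) ->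
  hex_of (mxact N e1) (mxact N f1) s -> hex_of (mxact N e1) (mxact N f1) (vopp s) ->
  hex_of (mxact N e1) (mxact N f1) m -> hex_of (mxact N e1) (mxact N f1) (vopp m) ->
  W0 x -> ~ hex_of (mxact N e1) (mxact N f1) x -> flip_adj W0 (hex_image N W0).
Proof.
move=> hN sm sm' w1 w2 w3 w4 k1 k2 k3 k4 wx kx.
split; first exact: adm_W0.
split; first exact: image_adm hN adm_W0.
split; first by move=> e; apply: kx; apply/(image_W0 N x)/e.
exists s, m; do 2 split=> //.
by do 8 (try split) => //; apply/(image_W0 N).
Qed.

Ltac memb := rewrite /mxact /e1 /f1 /mT /mTi /mL /mLi ?mk00 ?mk01 ?mk10 ?mk11 /hex_of; pick.
Ltac membW := rewrite /W0; pick.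
Ltac pneq H := move/pair_equal_spec: H; rewrite ?mul1r ?mul0r ?mulr1 ?mulr0 ?addr0 ?add0r; lia.
Ltac nmemb := rewrite /mxact /e1 /f1 /mT /mTi /mL /mLi ?mk00 ?mk01 ?mk10 ?mk11 /hex_of /vopp /vadd /=;
  let H := fresh "H" in intro H; repeat (destruct H as [H|H]; [pneq H|]); pneq H.
Ltac neqv := rewrite /vopp /=; move/pair_equal_spec; lia.

Lemma flip_gens N : gens N -> flip_adj W0 (hex_image N W0).
Proof.
move=> hN; have dN := det_gens hN.
case: hN => [->|[->|[->|->]]].
- apply: (@flip_crit mT (1, 0) (0, 1) (1, -1) (det_gens gensT)); rewrite -?(erefl mT) //;
  try solve [neqv|membW|memb|nmemb].
- apply: (@flip_crit mTi (1, 0) (1, -1) (0, 1) (det_gens gensTi)); rewrite -?(erefl mTi) //;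
  try solve [neqv|membW|memb|nmemb].
- apply: (@flip_crit mL (1, 0) (0, 1) (1, -1) (det_gens gensL)); rewrite -?(erefl mL) //;
  try solve [neqv|membW|memb|nmemb].
- apply: (@flip_crit mLi (0, 1) (1, -1) (1, 0) (det_gens gensLi)); rewrite -?(erefl mLi) //;
  try solve [neqv|membW|memb|nmemb].
Qed.

Lemma gen_walk A : gen A -> exists n, walk W0 (hex_image A W0) n.
Proof.
elim=> [||B N gB [n w] hN].
- exists 0%N; apply: walk0; [exact: adm_W0|exact: hex_eq_sym (image1 _)].
- exists 0%N; apply: walk0; first exact: adm_W0.
  apply: hex_eq_sym; apply: hex_eq_trans (image_oppm _ W0_sym) _; exact: image1.
- exists (1 + n)%N.
  have dN := det_gens hN.
  have w' := image_walk dN w.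
  have w1 := walk1 (flip_gens hN).
  have := walk_cat w1 (walk_eqr w' (hex_eq_sym (image_mul _ _ _))).
  exact.
Qed.

Lemma ex_min (P : nat -> Prop) : (exists n, P n) -> exists n, P n /\ forall m, P m -> (n <= m)%N.
Proof.
move=> [n hn]; elim: n {-2}n (leqnn n) hn => [|k ih] n hn Pn.
  exists n; split=> // m _; move: hn; rewrite leqn0 => /eqP ->; exact: leq0n.
case: (classic (exists m, P m /\ (m < n)%N)) => [[m [Pm hm]]|h].
  apply: (ih m) => //; move: hm hn; lia.
exists n; split=> // m Pm; case: (leqP n m) => // hm; exfalso; apply: h; by exists m.
Qed.

Lemma c_spec A : \det A = 1 -> gdist W0 (hex_image A W0) (c A).
Proof.
move=> hA; rewrite /c; apply: epsilon_spec.
have [n w] := gen_walk (all_gen hA).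
exact: ex_min (ex_intro _ n w).
Qed.

Lemma c_par A : \det A = 1 -> odd (c A) = sg A.
Proof.
move=> hA; have [w _] := c_spec hA.
rewrite (L6 w (M0 := 1) (M := A)) ?det1 ?sg1 //.
  exact: hex_eq_sym (image1 _).
Qed.

Lemma cmod2E A : \det A = 1 -> cmod2 A = (sg A)%:R.
Proof. by move=> hA; rewrite /cmod2 z2nat c_par. Qed.

Lemma sg_gens N : gens N -> sg N = true.
Proof. by move=> [->|[->|[->|->]]]; rewrite /sg /mT /mTi /mL /mLi ?mk00 ?mk01 ?mk10 ?mk11. Qed.

Lemma z2opp (x : 'Z_2) : - x = x.
Proof. by apply/eqP; rewrite eq_sym -subr_eq0 opprK z2xx. Qed.

Lemma hom_gen (f : 'M[int]_2 -> 'Z_2) :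
  (forall A B, \det A = 1 -> \det B = 1 -> f (A *m B) = f A + f B) ->
  (forall A, \det A = 1 -> f (- A) = f A) ->
  forall A, gen A -> f A = if sg A then f mT else 0.
Proof.
move=> hom ev.
have d1 : \det (1 : 'M[int]_2) = 1 by rewrite det1.
have f1 : f 1 = 0.
  have := hom 1 1 d1 d1; rewrite mul1mx; case: (z2cases (f 1)) => -> //; by rewrite z2_11.
have fN1 : f (- 1) = 0 by rewrite ev.
have fTi : f mTi = f mT.
  have := hom mTi mT (det_gens gensTi) (det_gens gensT); rewrite TiT f1 => /eqP.
  by rewrite eq_sym addr_eq0 z2opp => /eqP.
have dTLi : \det (mT *m mLi) = 1 by rewrite det_mulmx (det_gens gensT) (det_gens gensLi) mulr1.
have fLi : f mLi = f mT.
  have e : (mT *m mLi) *m ((mT *m mLi) *m (mT *m mLi)) = - 1 by mxsolve.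
  have d2 : \det ((mT *m mLi) *m (mT *m mLi)) = 1 by rewrite det_mulmx dTLi mulr1.
  have := hom _ _ dTLi d2; rewrite e fN1 (hom _ _ dTLi dTLi) (hom _ _ (det_gens gensT) (det_gens gensLi)).
  case: (z2cases (f mT)) => ->; case: (z2cases (f mLi)) => -> //.
have fL : f mL = f mT.
  have := hom mL mLi (det_gens gensL) (det_gens gensLi); rewrite LLi f1 fLi => /eqP.
  by rewrite eq_sym addr_eq0 z2opp => /eqP.
move=> A; elim=> [||B N gB ih hN].
- by rewrite f1 sg1.
- by rewrite fN1 sg_opp sg1.
have dB := det_gen gB; have dN := det_gens hN.
rewrite hom // sg_mul // sg_gens // ih.
have -> : f N = f mT by case: hN => [->|[->|[->|->]]].
by case: (sg B) => /=; rewrite ?z2xx ?addr0.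
Qed.

Theorem theorem6 :
  (* c(-A) = c(A) *)
  (forall A : 'M[int]_2, \det A = 1 -> c (- A) = c A) /\
  (* A |-> c(A) mod 2 is a group homomorphism SL(2,Z) -> Z/2 ... *)
  (forall A B : 'M[int]_2, \det A = 1 -> \det B = 1 ->
     cmod2 (A *m B) = cmod2 A + cmod2 B) /\
  (* ... which is surjective ... *)
  (forall z : 'Z_2, exists A : 'M[int]_2, \det A = 1 /\ cmod2 A = z) /\
  (* ... and equals every surjective homomorphism SL(2,Z) -> Z/2 that
     factors through SL(2,Z)/{+-I} (uniqueness). *)
  (forall psi : 'M[int]_2 -> 'Z_2,
     (forall A B : 'M[int]_2, \det A = 1 -> \det B = 1 ->
        psi (A *m B) = psi A + psi B) ->
     (forall A : 'M[int]_2, \det A = 1 -> psi (- A) = psi A) ->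
     (forall z : 'Z_2, exists A : 'M[int]_2, \det A = 1 /\ psi A = z) ->
     forall A : 'M[int]_2, \det A = 1 -> psi A = cmod2 A).
Proof.
split.
  move=> A hA; rewrite /c; congr (epsilon _ _).
  apply: functional_extensionality => n; apply: propositional_extensionality.
  have e := image_oppm A W0_sym.
  split; move=> [w hmin]; split.
  - exact: walk_eqr w e.
  - by move=> m wm; apply: hmin; apply: walk_eqr wm (hex_eq_sym e).
  - exact: walk_eqr w (hex_eq_sym e).
  - by move=> m wm; apply: hmin; apply: walk_eqr wm e.
split.
  move=> A B hA hB; have hAB : \det (A *m B) = 1 by rewrite det_mulmx hA hB mulr1.
  by rewrite !cmod2E // sg_mul // z2addb.
split.
  move=> z; case: (z2cases z) => ->.
    exists 1; split; first by rewrite det1.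
    by rewrite cmod2E ?det1 // sg1.
  exists mT; split; first exact: det_gens gensT.
  by rewrite cmod2E ?sg_gens //; [exact: gensT|exact: det_gens gensT].
move=> psi hom ev surj A hA.
have hg := hom_gen hom ev.
have psiT : psi mT = 1.
  case: (z2cases (psi mT)) => // h0.
  have [B [hB pB]] := surj 1.
  exfalso; apply: z2_10; rewrite -pB (hg B (all_gen hB)) h0; by case: (sg B).
rewrite (hg A (all_gen hA)) psiT cmod2E //; by case: (sg A).
Qed.
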